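(* Let $n\ge3$, $1<k<n/2$, $p>\frac{(n+2)k}{n-2k}$, and let $u$ be a regular solution of (1.6). If the limit $B:=\lim_{r\to\infty}u(r)r^{\frac{2k}{p-k}}$ exists and $B>0$, then $$B=A:=\Big(\tfrac1kC_{n-1}^{k-1}\Big)^{\frac{1}{p-k}}\Big(\tfrac{2k}{p-k}\Big)^{\frac{k}{p-k}}\Big(n-\tfrac{2pk}{p-k}\Big)^{\frac{1}{p-k}}.$$
   Context: Problem (1.6) is: given $\rho>0$, find $u$ with $-\tfrac{1}{k}C_{n-1}^{k-1}(r^{n-k}|u'|^{k-1}u')'=r^{n-1}u^{p}$, $u(r)>0$ for all $r>0$, $u'(0)=0$, $u(0)=\rho$, where $C_{n-1}^{k-1}$ is the binomial coefficient. A solution $u$ of (1.6) is regular if $x\mapsto u(|x|)$ belongs to $C^2(\mathbb{R}^n)$. *)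

(* Defs.v *)
From Stdlib Require Import Reals Lra Lia.
Open Scope R_scope.

(* Points of R^n are represented as functions nat -> R, of which only the
   coordinates 0..n-1 are used. *)
Fixpoint rsum (n : nat) (f : nat -> R) : R :=
  match n with O => 0 | S m => rsum m f + f m end.

Definition enorm (n : nat) (x : nat -> R) : R :=
  sqrt (rsum n (fun i => (x i) ^ 2)).

Definition shift (i : nat) (x : nat -> R) (t : R) : nat -> R :=
  fun j => if Nat.eqb j i then x j + t else x j.

Definition has_partial (i : nat) (F : (nat -> R) -> R) (x : nat -> R) (l : R) : Prop :=
  derivable_pt_lim (fun t => F (shift i x t)) 0 l.

Definition cont_Rn (n : nat) (G : (nat -> R) -> R) : Prop :=
  forall x eps, 0 < eps -> exists delta, 0 < delta /\
    forall y, enorm n (fun j => y j - x j) < delta -> Rabs (G y - G x) < eps.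

Definition C2_Rn (n : nat) (F : (nat -> R) -> R) : Prop :=
  exists (D1 : nat -> (nat -> R) -> R) (D2 : nat -> nat -> (nat -> R) -> R),
    cont_Rn n F /\
    (forall i x, (i < n)%nat -> has_partial i F x (D1 i x)) /\
    (forall i, (i < n)%nat -> cont_Rn n (D1 i)) /\
    (forall i j x, (i < n)%nat -> (j < n)%nat -> has_partial j (D1 i) x (D2 i j x)) /\
    (forall i j, (i < n)%nat -> (j < n)%nat -> cont_Rn n (D2 i j)).

(* u (defined on [0,oo); values at negative r are irrelevant) solves (1.6):
   -(1/k) C_{n-1}^{k-1} (r^{n-k} |u'|^{k-1} u')' = r^{n-1} u^p on r > 0,
   u > 0 on r > 0, u'(0) = 0 (one-sided derivative), u(0) = rho. *)
Definition solves_1_6 (n k : nat) (p rho : R) (u : R -> R) : Prop :=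
  (forall r, 0 < r -> 0 < u r) /\
  u 0 = rho /\
  (forall eps, 0 < eps -> exists delta, 0 < delta /\
      forall h, 0 < h < delta -> Rabs ((u h - u 0) / h) < eps) /\
  exists u1 : R -> R,
    (forall r, 0 < r -> derivable_pt_lim u r (u1 r)) /\
    (forall r, 0 < r ->
       derivable_pt_lim (fun s => s ^ (n - k) * (Rabs (u1 s)) ^ (k - 1) * u1 s) r
         (- (INR k / C (n - 1) (k - 1)) * (r ^ (n - 1) * Rpower (u r) p))).

Definition regular (n : nat) (u : R -> R) : Prop :=
  C2_Rn n (fun x => u (enorm n x)).

Definition lim_infty (f : R -> R) (l : R) : Prop :=
  forall eps, 0 < eps -> exists M, forall r, M < r -> Rabs (f r - l) < eps.

(* Main.v *)
Require Import Defs.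
From Stdlib Require Import Reals Lra Lia.
Open Scope R_scope.

Lemma eps_zero x : (forall eps, 0 < eps -> Rabs x < eps) -> x = 0.
Proof.
  intros H. destruct (Req_dec x 0) as [|Hx]; auto.
  assert (0 < Rabs x) by (apply Rabs_pos_lt; auto).
  specialize (H _ H0). lra.
Qed.

Lemma cont_comp_lim f h l : lim_infty f l -> continuity_pt h l ->
  lim_infty (fun r => h (f r)) (h l).
Proof.
  intros Hf Hh eps He.
  destruct (Hh eps He) as [d [Hd Hd2]].
  destruct (Hf d Hd) as [M HM]. exists M. intros r Hr.
  destruct (Req_dec (f r) l) as [E|E].
  - rewrite E. unfold Rminus. rewrite Rplus_opp_r, Rabs_R0. auto.
  - apply (Hd2 (f r)). split.
    + split; [exact I | auto].
    + simpl. unfold R_dist. apply HM; auto.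
Qed.

Lemma lim_ext f g l : (exists R0, forall r, R0 < r -> f r = g r) ->
  lim_infty f l -> lim_infty g l.
Proof.
  intros [R0 HR] Hf eps He. destruct (Hf eps He) as [M HM].
  exists (Rmax M R0). intros r Hr. rewrite <- HR.
  - apply HM. pose proof (Rmax_l M R0). lra.
  - pose proof (Rmax_r M R0). lra.
Qed.

Lemma cmvt f g f' g' a b : a < b ->
  (forall c, a <= c <= b -> derivable_pt_lim f c (f' c)) ->
  (forall c, a <= c <= b -> derivable_pt_lim g c (g' c)) ->
  exists c, a < c < b /\ (g b - g a) * f' c = (f b - f a) * g' c.
Proof.
  intros Hab Hf Hg.
  destruct (MVT_cor2 (fun x => (g b - g a) * f x - (f b - f a) * g x)
     (fun x => (g b - g a) * f' x - (f b - f a) * g' x) a b Hab) as [c [Hc1 Hc2]].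
  - intros c Hc.
    apply (derivable_pt_lim_minus (mult_real_fct (g b - g a) f) (mult_real_fct (f b - f a) g)).
    + apply derivable_pt_lim_scal; auto.
    + apply derivable_pt_lim_scal; auto.
  - exists c. split; auto.
    assert (E : ((g b - g a) * f' c - (f b - f a) * g' c) * (b - a) = 0) by lra.
    apply Rmult_integral in E. destruct E; lra.
Qed.

Lemma Rpower_pos x y : 0 < Rpower x y.
Proof. unfold Rpower. apply exp_pos. Qed.

Lemma Rpower_big b T : 0 < b -> exists R, 0 < R /\ forall r, R < r -> T < Rpower r b.
Proof.
  intros Hb. exists (Rpower (Rmax T 1) (/ b)). split.
  - apply Rpower_pos.
  - intros r Hr.
    assert (E : Rpower (Rpower (Rmax T 1) (/ b)) b = Rmax T 1).
    { rewrite Rpower_mult. rewrite Rinv_l by lra. apply Rpower_1.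
      pose proof (Rmax_r T 1). lra. }
    pose proof (Rmax_l T 1).
    assert (Rpower (Rpower (Rmax T 1) (/ b)) b < Rpower r b).
    { apply Rlt_Rpower_l; auto. split; auto. apply Rpower_pos. }
    lra.
Qed.

Lemma LH (f f' : R -> R) (b M : R) : 0 < b ->
  (forall r, 0 < r -> derivable_pt_lim f r (f' r)) ->
  lim_infty (fun r => f' r / Rpower r (b - 1)) M ->
  lim_infty (fun r => f r / Rpower r b) (M / b).
Proof.
  intros Hb Hd Hl eps He.
  destruct (Hl (eps * b / 2)) as [R1 HR1].
  { apply Rmult_lt_0_compat; [apply Rmult_lt_0_compat|]; lra. }
  set (r0 := Rmax R1 1 + 1).
  assert (Hr0 : R1 < r0 /\ 1 < r0) by (unfold r0; pose proof (Rmax_l R1 1); pose proof (Rmax_r R1 1); lra).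
  set (h := fun x => f x - M / b * Rpower x b).
  destruct (Rpower_big b (2 * Rabs (h r0) / eps) Hb) as [R2 [HR2 HR2']].
  exists (Rmax r0 R2). intros r Hr.
  pose proof (Rmax_l r0 R2). pose proof (Rmax_r r0 R2).
  destruct (cmvt h (fun x => Rpower x b)
      (fun x => f' x - M / b * (b * Rpower x (b - 1))) (fun x => b * Rpower x (b - 1)) r0 r)
    as [c [Hc Hc2]].
  - lra.
  - intros c Hc. unfold h.
    apply (derivable_pt_lim_minus f (mult_real_fct (M/b) (fun x => Rpower x b))).
    + apply Hd; lra.
    + apply derivable_pt_lim_scal. apply derivable_pt_lim_power; lra.
  - intros c Hc. apply derivable_pt_lim_power; lra.
  - assert (Hcp : 0 < Rpower c (b - 1)) by apply Rpower_pos.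
    assert (Hdel := HR1 c ltac:(lra)).
    set (del := f' c / Rpower c (b - 1) - M) in *.
    assert (E1 : f' c - M / b * (b * Rpower c (b - 1)) = Rpower c (b - 1) * del)
      by (unfold del; field; lra).
    rewrite E1 in Hc2.
    assert (E2 : h r - h r0 = (Rpower r b - Rpower r0 b) * del / b).
    { apply (Rmult_eq_reg_r (b * Rpower c (b - 1))); [|apply Rgt_not_eq; apply Rmult_lt_0_compat; lra].
      transitivity ((h r - h r0) * (b * Rpower c (b - 1))); [ring|]. rewrite <- Hc2. field. lra. }
    assert (Hg : Rpower r0 b < Rpower r b) by (apply Rlt_Rpower_l; lra).
    assert (Hg0 : 0 < Rpower r0 b) by apply Rpower_pos.
    assert (Hgr : 2 * Rabs (h r0) / eps < Rpower r b) by (apply HR2'; lra).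
    assert (E3 : f r / Rpower r b - M / b = h r / Rpower r b) by (unfold h; field; lra).
    rewrite E3.
    assert (Hhr : Rabs (h r) <= Rabs (h r0) + Rpower r b * (eps / 2)).
    { replace (h r) with (h r0 + (Rpower r b - Rpower r0 b) * del / b) by lra.
      eapply Rle_trans; [apply Rabs_triang|]. apply Rplus_le_compat_l.
      unfold Rdiv. rewrite Rabs_mult, Rabs_mult, (Rabs_right (Rpower r b - Rpower r0 b)) by lra.
      rewrite Rabs_inv, (Rabs_right b) by lra.
      apply Rlt_le in Hdel.
      assert (0 <= Rabs del * / b <= eps / 2).
      { split. apply Rmult_le_pos; [apply Rabs_pos|left; apply Rinv_0_lt_compat; lra].
        apply (Rmult_le_reg_r b); auto. rewrite Rmult_assoc, Rinv_l by lra. lra. }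
      rewrite Rmult_assoc. apply Rmult_le_compat; try lra. }
    assert (Habs : Rabs (h r0) < Rpower r b * eps / 2).
    { apply (Rmult_lt_reg_r (2 / eps)). apply Rdiv_lt_0_compat; lra.
      replace (Rpower r b * eps / 2 * (2 / eps)) with (Rpower r b) by (field; lra).
      replace (Rabs (h r0) * (2 / eps)) with (2 * Rabs (h r0) / eps) by (field; lra). auto. }
    assert (Hgp : 0 < Rpower r b) by lra.
    unfold Rdiv. rewrite Rabs_mult, Rabs_inv, (Rabs_right (Rpower r b)) by lra.
    apply (Rmult_lt_reg_r (Rpower r b)); auto.
    rewrite Rmult_assoc, Rinv_l by lra. lra.
Qed.

Lemma cont_eps h x eps : continuity_pt h x -> 0 < eps ->
  exists d, 0 < d /\ forall y, Rabs (y - x) < d -> Rabs (h y - h x) < eps.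
Proof.
  intros Hh He. destruct (Hh eps He) as [d [Hd Hd2]].
  exists d. split; auto. intros y Hy.
  destruct (Req_dec y x) as [E|E].
  - rewrite E. unfold Rminus. rewrite Rplus_opp_r, Rabs_R0. auto.
  - apply (Hd2 y). split; [split; [exact I| auto]|]. simpl. unfold R_dist. auto.
Qed.

Lemma lim_opp f l : lim_infty f l -> lim_infty (fun r => - f r) (- l).
Proof.
  intros Hf eps He. destruct (Hf eps He) as [M HM]. exists M. intros r Hr.
  replace (- f r - - l) with (- (f r - l)) by ring. rewrite Rabs_Ropp. auto.
Qed.

Lemma pow_pred m k : (1 <= k)%nat -> m ^ (k - 1) * m = m ^ k.
Proof.
  intros Hk. rewrite Rmult_comm, tech_pow_Rmult. f_equal. lia.
Qed.

Lemma Cpos a b : 0 < C a b.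
Proof.
  unfold C. apply Rdiv_lt_0_compat.
  - apply lt_0_INR, Factorial.lt_O_fact.
  - apply Rmult_lt_0_compat; apply lt_0_INR, Factorial.lt_O_fact.
Qed.

Theorem mainTheorem9 (n k : nat) (p rho : R) (u : R -> R) :
  (3 <= n)%nat -> (1 < k)%nat -> (2 * k < n)%nat ->
  p > (INR n + 2) * INR k / (INR n - 2 * INR k) ->
  0 < rho ->
  solves_1_6 n k p rho u ->
  regular n u ->
  forall B : R,
    lim_infty (fun r => u r * Rpower r (2 * INR k / (p - INR k))) B ->
    0 < B ->
    B = Rpower (C (n - 1) (k - 1) / INR k) (1 / (p - INR k))
        * Rpower (2 * INR k / (p - INR k)) (INR k / (p - INR k))
        * Rpower (INR n - 2 * p * INR k / (p - INR k)) (1 / (p - INR k)).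
Proof.
  intros Hn Hk Hnk Hp _ Hsol _ B Hlim HB.
  destruct Hsol as [Hpos [_ [_ [u1 [Hu1 Hw]]]]].
  assert (Hk2 : 2 <= INR k) by (replace 2 with (INR 2) by (simpl; ring); apply le_INR; lia).
  assert (Hnk2 : 2 * INR k + 1 <= INR n).
  { replace (2 * INR k + 1) with (INR (2 * k + 1)) by (rewrite plus_INR, mult_INR; simpl; ring).
    apply le_INR; lia. }
  assert (Hp1 : p * (INR n - 2 * INR k) > (INR n + 2) * INR k).
  { apply (Rmult_gt_compat_r (INR n - 2 * INR k)) in Hp; [|lra].
    unfold Rdiv in Hp. rewrite Rmult_assoc, Rinv_l, Rmult_1_r in Hp; lra. }
  assert (Hpk : INR k < p) by nra.
  set (a := 2 * INR k / (p - INR k)) in *.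
  set (be := INR n - 2 * p * INR k / (p - INR k)).
  set (K := INR k / C (n - 1) (k - 1)).
  assert (Ha : 0 < a) by (unfold a; apply Rdiv_lt_0_compat; lra).
  assert (Hbe : 0 < be).
  { unfold be. replace (INR n - 2 * p * INR k / (p - INR k)) with
      ((p * (INR n - 2 * INR k) - INR n * INR k) / (p - INR k)) by (field; lra).
    apply Rdiv_lt_0_compat; nra. }
  assert (HC := Cpos (n - 1) (k - 1)).
  assert (HK : 0 < K) by (unfold K; apply Rdiv_lt_0_compat; lra).
  set (v := fun r => u r * Rpower r a) in *.
  set (w := fun s => s ^ (n - k) * Rabs (u1 s) ^ (k - 1) * u1 s) in *.
  set (M := - (K * Rpower B p)).
  assert (S1 : lim_infty (fun r => w r / Rpower r be) (M / be)).
  { apply (LH w (fun r => - K * (r ^ (n - 1) * Rpower (u r) p))); auto.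
    replace M with (- K * Rpower B p) by (unfold M; ring).
    apply (lim_ext (fun r => - K * Rpower (v r) p)).
    - exists 0. intros r Hr. unfold v.
      assert (Hur := Hpos r Hr).
      assert (E1 : Rpower (u r * Rpower r a) p = Rpower (u r) p * Rpower r (a * p)).
      { rewrite <- Rpower_mult_distr; [rewrite Rpower_mult; auto | auto | apply Rpower_pos]. }
      assert (E2 : r ^ (n - 1) = Rpower r (be - 1) * Rpower r (a * p)).
      { rewrite <- Rpower_plus, <- Rpower_pow by lra. f_equal.
        rewrite minus_INR by lia. simpl INR. unfold be, a. field. lra. }
      rewrite E1, E2. assert (0 < Rpower r (be - 1)) by apply Rpower_pos.
      field. lra.
    - apply (cont_comp_lim v (fun x => - K * Rpower x p)); auto.
      apply derivable_continuous_pt.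
      exists (- K * (p * Rpower B (p - 1))).
      apply (derivable_pt_lim_scal (fun x => Rpower x p)).
      apply derivable_pt_lim_power; auto. }
  set (y := fun c => - u1 c * Rpower c (a + 1)).
  assert (S2 : lim_infty (fun c => y c ^ k) (K * Rpower B p / be)).
  { assert (HMb : 0 < K * Rpower B p / be).
    { apply Rdiv_lt_0_compat; [apply Rmult_lt_0_compat; [lra|apply Rpower_pos]| lra]. }
    destruct (S1 _ HMb) as [R1 HR1].
    assert (EM : M / be = - (K * Rpower B p / be)) by (unfold M; field; lra).
    replace (K * Rpower B p / be) with (- (M / be)) by lra.
    apply (lim_ext (fun r => - (w r / Rpower r be))); [| apply lim_opp; auto].
    exists (Rmax R1 0). intros r Hr. pose proof (Rmax_l R1 0). pose proof (Rmax_r R1 0).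
    assert (Hr0 : 0 < r) by lra.
    assert (Hg : 0 < Rpower r be) by apply Rpower_pos.
    assert (Hwn : w r < 0).
    { specialize (HR1 r ltac:(lra)).
      assert (w r / Rpower r be < 0).
      { apply Rabs_def2 in HR1. destruct HR1. lra. }
      replace (w r) with (w r / Rpower r be * Rpower r be) by (field; lra). nra. }
    assert (Hu1n : u1 r < 0).
    { destruct (Rlt_or_le (u1 r) 0) as [|Hge]; auto. exfalso. unfold w in Hwn.
      assert (0 <= r ^ (n - k)) by (apply pow_le; lra).
      assert (0 <= Rabs (u1 r) ^ (k - 1)) by (apply pow_le, Rabs_pos).
      assert (0 <= r ^ (n - k) * Rabs (u1 r) ^ (k - 1)) by (apply Rmult_le_pos; auto). nra. }
    unfold y, w. rewrite Rabs_left by auto.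
    set (m := - u1 r). replace (u1 r) with (- m) by (unfold m; ring).
    rewrite Rpow_mult_distr.
    rewrite <- (Rpower_pow k (Rpower r (a + 1))) by apply Rpower_pos. rewrite Rpower_mult.
    rewrite <- (Rpower_pow (n - k) r) by lra.
    assert (E : Rpower r (INR (n - k)) = Rpower r be * Rpower r ((a + 1) * INR k)).
    { rewrite <- Rpower_plus. f_equal. rewrite minus_INR by lia. unfold be, a. field. lra. }
    rewrite E. rewrite <- (pow_pred m k) by lia. field. lra. }
  assert (S3 : forall eps, 0 < eps -> exists R, forall r, R < r ->
             exists c, r < c /\ Rabs (y c - a * B) < eps).
  { intros eps He.
    set (t := Rpower 2 (- a)).
    assert (Ht : 0 < t < 1).
    { split. apply Rpower_pos. unfold t. rewrite Rpower_Ropp.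
      assert (1 < Rpower 2 a). { rewrite <- (Rpower_O 2) by lra. apply Rpower_lt; lra. }
      rewrite <- Rinv_1. apply Rinv_lt_contravar; lra. }
    set (e0 := eps * (1 - t) / (a * (1 + t))).
    assert (He0 : 0 < e0) by (unfold e0; apply Rdiv_lt_0_compat; nra).
    destruct (Hlim e0 He0) as [R0 HR0].
    exists (Rmax R0 1). intros r Hr. pose proof (Rmax_l R0 1). pose proof (Rmax_r R0 1).
    assert (Hr0 : 0 < r) by lra.
    destruct (cmvt u (fun x => Rpower x (- a)) u1 (fun x => - a * Rpower x (- a - 1)) r (2 * r))
      as [c [Hc Hc2]].
    - lra.
    - intros c Hc; apply Hu1; lra.
    - intros c Hc; apply derivable_pt_lim_power; lra.
    - exists c. split; [lra|].
      assert (Hv : forall x, 0 < x -> u x = v x * Rpower x (- a)).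
      { intros x Hx. unfold v. rewrite Rmult_assoc, <- Rpower_plus.
        replace (a + - a) with 0 by ring. rewrite Rpower_O; lra. }
      rewrite (Hv r), (Hv (2 * r)) in Hc2 by lra.
      assert (E2 : Rpower (2 * r) (- a) = t * Rpower r (- a)).
      { unfold t. rewrite Rpower_mult_distr by lra. reflexivity. }
      rewrite E2 in Hc2.
      set (G := Rpower r (- a)) in *. assert (HG : 0 < G) by apply Rpower_pos.
      set (P := Rpower c (- a - 1)) in *.
      assert (HPQ : P * Rpower c (a + 1) = 1).
      { unfold P. rewrite <- Rpower_plus. replace (- a - 1 + (a + 1)) with 0 by ring.
        apply Rpower_O; lra. }
      assert (Hc3 : (t - 1) * u1 c = - a * P * (t * v (2 * r) - v r)).
      { apply (Rmult_eq_reg_r G); [|lra].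
        transitivity ((t * G - G) * u1 c); [ring|]. rewrite Hc2. ring. }
      assert (Ey : y c * (1 - t) = a * (v r - t * v (2 * r))).
      { unfold y. transitivity ((t - 1) * u1 c * Rpower c (a + 1)); [ring|]. rewrite Hc3.
        transitivity (- a * (P * Rpower c (a + 1)) * (t * v (2 * r) - v r)); [ring|].
        rewrite HPQ. ring. }
      assert (Hy : y c - a * B = a * ((v r - B) - t * (v (2 * r) - B)) / (1 - t)).
      { replace (y c) with (y c * (1 - t) / (1 - t)) by (field; lra). rewrite Ey. field. lra. }
      rewrite Hy.
      assert (H1 := HR0 r ltac:(lra)). assert (H2 := HR0 (2 * r) ltac:(lra)).
      assert (HX : Rabs ((v r - B) - t * (v (2 * r) - B)) < e0 * (1 + t)).
      { unfold Rminus at 1. eapply Rle_lt_trans; [apply Rabs_triang|].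
        rewrite Rabs_Ropp, Rabs_mult, (Rabs_right t) by lra. nra. }
      unfold Rdiv. rewrite Rabs_mult, Rabs_mult, (Rabs_right a), Rabs_inv, (Rabs_right (1 - t)) by lra.
      apply Rlt_le_trans with (a * (e0 * (1 + t)) * / (1 - t)).
      + apply Rmult_lt_compat_r; [apply Rinv_0_lt_compat; lra|].
        apply Rmult_lt_compat_l; auto.
      + unfold e0. right. field. split; lra. }
  assert (Heq : (a * B) ^ k = K * Rpower B p / be).
  { apply Rminus_diag_uniq. apply eps_zero. intros eps He.
    destruct (cont_eps (fun x => x ^ k) (a * B) (eps / 2)) as [d [Hd Hd2]];
      [apply derivable_continuous_pt, derivable_pt_pow | lra |].
    destruct (S3 d Hd) as [R3 HR3]. destruct (S2 (eps / 2) ltac:(lra)) as [R2 HR2].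
    pose proof (Rmax_l R2 R3). pose proof (Rmax_r R2 R3).
    destruct (HR3 (Rmax R2 R3 + 1)) as [c [Hc1 Hc2]]; [lra|].
    specialize (Hd2 (y c) Hc2). specialize (HR2 c ltac:(lra)). cbv beta in *.
    replace ((a * B) ^ k - K * Rpower B p / be) with
      ((y c ^ k - K * Rpower B p / be) + - (y c ^ k - (a * B) ^ k)) by ring.
    eapply Rle_lt_trans; [apply Rabs_triang|]. rewrite Rabs_Ropp. lra. }
  assert (EX : Rpower B p = Rpower B (p - INR k) * B ^ k).
  { rewrite <- (Rpower_pow k B), <- Rpower_plus by lra. f_equal. ring. }
  rewrite Rpow_mult_distr, EX in Heq.
  assert (HBk : 0 < B ^ k) by (apply pow_lt; lra).
  assert (Hak : a ^ k = K * Rpower B (p - INR k) / be).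
  { apply (Rmult_eq_reg_r (B ^ k)); [rewrite Heq; field; lra | lra]. }
  replace (INR k / (p - INR k)) with (INR k * (1 / (p - INR k))) by (field; lra).
  rewrite <- (Rpower_mult a), Rpower_pow by lra.
  assert (Hak0 : 0 < a ^ k) by (apply pow_lt; lra).
  assert (HCk : 0 < C (n - 1) (k - 1) / INR k) by (apply Rdiv_lt_0_compat; lra).
  rewrite (Rpower_mult_distr _ (a ^ k)) by lra. rewrite Rpower_mult_distr by (try apply Rmult_lt_0_compat; lra).
  rewrite Hak.
  replace (C (n - 1) (k - 1) / INR k * (K * Rpower B (p - INR k) / be) * be)
    with (Rpower B (p - INR k)) by (unfold K; field; lra).
  rewrite Rpower_mult. replace ((p - INR k) * (1 / (p - INR k))) with 1 by (field; lra).
  rewrite Rpower_1; lra.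
Qed.
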